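(* Let $N\ge1$, $\Delta w>0$, $\Delta t>0$. For $i=0,\dots,N-1$ let $D_{i+1/2}>0$ and $\tilde{\mathcal C}^n_{i+1/2}\in\mathbb R$ be given (in applications computed from $f^n$), and set $\lambda^n_{i+1/2}=\Delta w\,\tilde{\mathcal C}^n_{i+1/2}/D_{i+1/2}$, $\delta^n_{i+1/2}=\frac{1}{\lambda^n_{i+1/2}}+\frac{1}{1-e^{\lambda^n_{i+1/2}}}$ (with $\delta^n_{i+1/2}=1/2$ if $\lambda^n_{i+1/2}=0$). Consider the semi-implicit scheme $$f_i^{n+1}=f_i^n+\Delta t\,\frac{\hat{\mathcal F}^{n+1}_{i+1/2}-\hat{\mathcal F}^{n+1}_{i-1/2}}{\Delta w},\quad i=0,\dots,N,$$ with $\hat{\mathcal F}^{n+1}_{-1/2}=\hat{\mathcal F}^{n+1}_{N+1/2}=0$ and, for $i=0,\dots,N-1$, $$\hat{\mathcal F}^{n+1}_{i+1/2}=\tilde{\mathcal C}^n_{i+1/2}\big[(1-\delta^n_{i+1/2})f^{n+1}_{i+1}+\delta^n_{i+1/2}f^{n+1}_i\big]+D_{i+1/2}\frac{f^{n+1}_{i+1}-f^{n+1}_i}{\Delta w}.$$ Let $M=\max_i|\tilde{\mathcal C}^n_{i+1/2}|$. If $\Delta t<\frac{\Delta w}{2M}$, then this linear system for $(f_0^{n+1},\dots,f_N^{n+1})$ has a unique solution, and $f_i^n\ge0$ for all $i$ implies $f_i^{n+1}\ge0$ for all $i=0,\dots,N$.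
   Context: Chang–Cooper type (SP-CC) discretization of the 1D Fokker–Planck equation $\partial_t f=\partial_w[(\mathcal B[f]+D')f+D\partial_w f]$ on a uniform grid with no-flux boundary conditions; the drift coefficients and weights are frozen at time level $n$ while $f$ is taken at level $n+1$. *)

(* Defs.v *)
From Stdlib Require Import Reals List Arith.
Open Scope R_scope.

(* Grid values are functions nat -> R; only indices 0..N matter for f,
   and 0..N-1 for the half-point quantities (index i stands for i+1/2). *)

Definition cc_lambda (dw : R) (C D : nat -> R) (i : nat) : R :=
  dw * C i / D i.

Definition cc_delta (dw : R) (C D : nat -> R) (i : nat) : R :=
  let l := cc_lambda dw C D i in
  if Req_EM_T l 0 then / 2 else / l + / (1 - exp l).

Definition cc_flux (N : nat) (dw : R) (C D : nat -> R) (g : nat -> R)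
    (i : nat) : R :=
  if Nat.ltb i N then
    C i * ((1 - cc_delta dw C D i) * g (S i) + cc_delta dw C D i * g i)
    + D i * (g (S i) - g i) / dw
  else 0.

Definition cc_flux_left (N : nat) (dw : R) (C D : nat -> R) (g : nat -> R)
    (i : nat) : R :=
  match i with
  | O => 0
  | S j => cc_flux N dw C D g j
  end.

Definition cc_scheme (N : nat) (dw dt : R) (C D f g : nat -> R) : Prop :=
  forall i : nat, (i <= N)%nat ->
    g i = f i + dt * (cc_flux N dw C D g i - cc_flux_left N dw C D g i) / dw.

Definition cc_Cmax (N : nat) (C : nat -> R) : R :=
  fold_right Rmax 0 (map (fun i => Rabs (C i)) (seq 0 N)).

(* Main.v *)
Require Import Defs.
From Stdlib Require Import Reals List Arith Lra Lia Psatz.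
Open Scope R_scope.

Section S.
Variables (N : nat) (dw dt : R) (C D : nat -> R).
Hypothesis hdw : 0 < dw.
Hypothesis hdt : 0 < dt.
Hypothesis hD : forall i : nat, (i < N)%nat -> 0 < D i.

Definition aa i := C i * (1 - cc_delta dw C D i) + D i / dw.
Definition bb i := D i / dw - C i * cc_delta dw C D i.

Lemma flux_eq g i : (i < N)%nat -> cc_flux N dw C D g i = aa i * g (S i) - bb i * g i.
Proof.
  intro Hi. unfold cc_flux, aa, bb.
  replace (Nat.ltb i N) with true by (symmetry; apply Nat.ltb_lt; auto).
  unfold Rdiv; ring.
Qed.

Lemma div_pos_aux x y : 0 < x * y -> 0 < x / y.
Proof.
  intro H. assert (y <> 0) by (intro E; subst; lra).
  replace (x / y) with (x * y * / (y * y)) by (field; auto).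
  apply Rmult_lt_0_compat; auto. apply Rinv_0_lt_compat. nra.
Qed.

Lemma ab_pos i : (i < N)%nat -> 0 < aa i /\ 0 < bb i.
Proof.
  intro Hi. pose proof (hD i Hi) as HDi.
  unfold aa, bb, cc_delta. cbv zeta.
  destruct (Req_EM_T (cc_lambda dw C D i) 0) as [E|E].
  - unfold cc_lambda in E.
    assert (HC : C i = 0).
    { assert (dw * C i = 0).
      { replace (dw * C i) with (dw * C i / D i * D i) by (field; lra). rewrite E; ring. }
      apply Rmult_integral in H. lra. }
    rewrite HC. split; apply Rlt_le_trans with (D i / dw);
      try (apply Rdiv_lt_0_compat; lra); lra.
  - set (l := cc_lambda dw C D i) in *.
    assert (HC : C i = l * D i / dw) by (unfold l, cc_lambda; field; lra).
    set (Ex := exp l).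
    assert (Hs : 0 < l * (Ex - 1)).
    { destruct (Rlt_or_le 0 l) as [Hl|Hl].
      - assert (1 < Ex) by (unfold Ex; rewrite <- exp_0; apply exp_increasing; auto).
        nra.
      - assert (l < 0) by lra.
        assert (Ex < 1) by (unfold Ex; rewrite <- exp_0; apply exp_increasing; auto).
        nra. }
    assert (HE1 : Ex - 1 <> 0) by (intro Z; rewrite Z in Hs; lra).
    assert (HE2 : 1 - Ex <> 0) by lra.
    assert (HEp : 0 < Ex) by (unfold Ex; apply exp_pos).
    rewrite HC. split.
    + replace (l * D i / dw * (1 - (/ l + / (1 - Ex))) + D i / dw)
        with (D i / dw * (l * Ex / (Ex - 1))) by (field; repeat split; lra).
      apply Rmult_lt_0_compat. apply Rdiv_lt_0_compat; lra.
      apply div_pos_aux. nra.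
    + replace (D i / dw - l * D i / dw * (/ l + / (1 - Ex)))
        with (D i / dw * (l / (Ex - 1))) by (field; repeat split; lra).
      apply Rmult_lt_0_compat. apply Rdiv_lt_0_compat; lra.
      apply div_pos_aux. nra.
Qed.

Fixpoint ssum (h : nat -> R) (k : nat) : R :=
  match k with O => h O | S k => ssum h k + h (S k) end.

Lemma ssum_sub h1 h2 k : ssum (fun i => h1 i - h2 i) k = ssum h1 k - ssum h2 k.
Proof. induction k; simpl; try rewrite IHk; ring. Qed.

Lemma ssum_nonneg h k : (forall i, (i <= k)%nat -> 0 <= h i) -> 0 <= ssum h k.
Proof.
  induction k; simpl; intro H. apply H; lia.
  assert (0 <= ssum h k) by (apply IHk; intros; apply H; lia).
  assert (0 <= h (S k)) by (apply H; lia). lra.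
Qed.

Lemma ssum_nonpos h k : (forall i, (i <= k)%nat -> h i <= 0) -> ssum h k <= 0.
Proof.
  induction k; simpl; intro H. apply H; lia.
  assert (ssum h k <= 0) by (apply IHk; intros; apply H; lia).
  assert (h (S k) <= 0) by (apply H; lia). lra.
Qed.

Lemma ssum_le_term h k : (forall i, (i <= k)%nat -> h i <= 0) ->
  forall j, (j <= k)%nat -> ssum h k <= h j.
Proof.
  induction k; simpl; intros H j Hj.
  - replace j with O by lia. lra.
  - destruct (Nat.eq_dec j (S k)) as [->|Hn].
    + assert (ssum h k <= 0) by (apply ssum_nonpos; intros; apply H; lia). lra.
    + assert (ssum h k <= h j) by (apply IHk; [intros; apply H; lia | lia]).
      assert (h (S k) <= 0) by (apply H; lia). lra.
Qed.

Lemma positivity f g : (forall i, (i <= N)%nat -> 0 <= f i) ->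
  cc_scheme N dw dt C D f g -> forall i, (i <= N)%nat -> 0 <= g i.
Proof.
  intros Hf Hs.
  set (chi := fun i => if Rlt_dec (g i) 0 then 1 else 0).
  set (F := fun i => cc_flux N dw C D g i).
  set (U := fun i => chi i * (F i - cc_flux_left N dw C D g i)).
  set (V := fun i => chi i * (g i - f i)).
  assert (HVU : forall k, (k <= N)%nat -> ssum V k = dt / dw * ssum U k).
  { induction k; intro Hk; simpl.
    - unfold V, U. rewrite (Hs O Hk) at 1. unfold F. field. lra.
    - rewrite IHk by lia. unfold V, U. rewrite (Hs (S k) Hk) at 1. unfold F. field. lra. }
  set (T := fix T k := match k with O => 0 | S k => T k + F k * (chi k - chi (S k)) end).
  assert (HUT : forall k, ssum U k = T k + chi k * F k).
  { induction k; simpl.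
    - unfold U. simpl. ring.
    - rewrite IHk. unfold U. simpl. fold (F k). ring. }
  assert (HT : forall k, (k <= N)%nat -> 0 <= T k).
  { induction k; intro Hk; simpl. lra.
    assert (0 <= T k) by (apply IHk; lia).
    assert (0 <= F k * (chi k - chi (S k))).
    { unfold F. rewrite flux_eq by lia.
      destruct (ab_pos k ltac:(lia)) as [Ha Hb].
      unfold chi. destruct (Rlt_dec (g k) 0); destruct (Rlt_dec (g (S k)) 0); nra. }
    lra. }
  assert (HFN : F N = 0).
  { unfold F, cc_flux. rewrite Nat.ltb_irrefl. auto. }
  assert (H1 : 0 <= ssum V N).
  { rewrite HVU by lia. rewrite HUT, HFN.
    apply Rmult_le_pos. apply Rlt_le, Rdiv_lt_0_compat; lra.
    assert (0 <= T N) by (apply HT; lia). lra. }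
  assert (H2 : ssum V N = ssum (fun i => chi i * g i) N - ssum (fun i => chi i * f i) N).
  { rewrite <- ssum_sub. unfold V. clear. induction N as [|n IH]; simpl. ring.
    rewrite IH. ring. }
  assert (H3 : 0 <= ssum (fun i => chi i * f i) N).
  { apply ssum_nonneg. intros i Hi. unfold chi.
    destruct (Rlt_dec (g i) 0); pose proof (Hf i Hi); lra. }
  assert (Hneg : forall i, (i <= N)%nat -> chi i * g i <= 0).
  { intros i _. unfold chi. destruct (Rlt_dec (g i) 0); lra. }
  intros j Hj. destruct (Rlt_dec (g j) 0) as [Hgj|Hgj]; [|lra].
  pose proof (ssum_le_term _ _ Hneg j Hj) as H4.
  unfold chi at 2 in H4. destruct (Rlt_dec (g j) 0); [|lra]. lra.
Qed.

Lemma scheme_diff f g h : cc_scheme N dw dt C D f g -> cc_scheme N dw dt C D f h ->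
  cc_scheme N dw dt C D (fun _ => 0) (fun i => h i - g i).
Proof.
  intros Hg Hh i Hi. rewrite (Hg i Hi), (Hh i Hi).
  assert (Hfl : forall k, cc_flux N dw C D (fun i => h i - g i) k =
    cc_flux N dw C D h k - cc_flux N dw C D g k).
  { intro k. unfold cc_flux. destruct (Nat.ltb k N); unfold Rdiv; ring. }
  assert (Hfll : cc_flux_left N dw C D (fun i => h i - g i) i =
    cc_flux_left N dw C D h i - cc_flux_left N dw C D g i).
  { destruct i; simpl. ring. apply Hfl. }
  rewrite Hfl, Hfll. unfold Rdiv. ring.
Qed.

(* shooting *)
Definition rr := dt / dw.

Fixpoint st (t : R) (e : nat -> R) (k : nat) : R * R :=
  match k with
  | O => (t, t)
  | S k => let p := st t e k in
           let y := (bb k * fst p + (snd p - e k) * / rr) * / aa k in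
           (y, snd p + y)
  end.

Lemma st_lin t e k : st t e k =
  (fst (st 0 e k) + t * fst (st 1 (fun _ => 0) k),
   snd (st 0 e k) + t * snd (st 1 (fun _ => 0) k)).
Proof.
  induction k; simpl. f_equal; ring.
  rewrite IHk. simpl. f_equal; ring.
Qed.

Lemma st_hom_pos k : (k <= N)%nat ->
  0 < fst (st 1 (fun _ => 0) k) /\ 0 < snd (st 1 (fun _ => 0) k).
Proof.
  induction k; intro Hk; simpl. lra.
  destruct (IHk ltac:(lia)) as [H1 H2].
  destruct (ab_pos k ltac:(lia)) as [Ha Hb].
  assert (Hr : 0 < / rr) by (apply Rinv_0_lt_compat; unfold rr; apply Rdiv_lt_0_compat; lra).
  assert (0 < (bb k * fst (st 1 (fun _ => 0) k) + (snd (st 1 (fun _ => 0) k) - 0) * / rr) * / aa k).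
  { apply Rmult_lt_0_compat; [|apply Rinv_0_lt_compat; auto].
    assert (0 < bb k * fst (st 1 (fun _ => 0) k)) by nra.
    assert (0 < (snd (st 1 (fun _ => 0) k) - 0) * / rr) by nra. lra. }
  split; lra.
Qed.

Fixpoint Phi (f : nat -> R) (k : nat) : R :=
  match k with O => f O | S k => Phi f k + f (S k) end.

Lemma existence f : (1 <= N)%nat -> exists g, cc_scheme N dw dt C D f g.
Proof.
  intro HN.
  set (Q := snd (st 1 (fun _ => 0) N)).
  assert (HQ : 0 < Q) by (apply st_hom_pos; lia).
  set (t := (Phi f N - snd (st 0 (Phi f) N)) / Q).
  set (g := fun i => fst (st t (Phi f) i)).
  set (G := fun i => snd (st t (Phi f) i)).
  assert (HG0 : G O = g O) by reflexivity.
  assert (HGS : forall k, G (S k) = G k + g (S k)) by reflexivity.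
  assert (Hr : rr <> 0) by (unfold rr; apply Rgt_not_eq, Rdiv_lt_0_compat; lra).
  assert (HB : forall k, (k < N)%nat -> aa k * g (S k) - bb k * g k = (G k - Phi f k) / rr).
  { intros k Hk. destruct (ab_pos k Hk) as [Ha _].
    unfold g, G. simpl. field. split; lra. }
  assert (HC : G N = Phi f N).
  { unfold G. rewrite st_lin. simpl. fold Q. unfold t. field. lra. }
  exists g. intros i Hi.
  assert (Hrr : dt * / dw = rr) by reflexivity.
  destruct (Nat.lt_ge_cases i N) as [Hlt|Hge].
  - rewrite flux_eq by auto. rewrite HB by auto.
    destruct i as [|j].
    + simpl. unfold rr in *. rewrite HG0. simpl. field. lra.
    + simpl. rewrite flux_eq by lia. rewrite HB by lia.
      rewrite HGS. unfold rr in *. field. split; lra.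
  - assert (i = N) by lia. subst i.
    assert (HNj : N = S (pred N)) by lia.
    set (j := pred N) in *.
    replace (cc_flux_left N dw C D g N) with (cc_flux N dw C D g j)
      by (rewrite <- HNj at 2 || idtac; change (cc_flux N dw C D g j) with (cc_flux_left N dw C D g (S j)); rewrite <- HNj; reflexivity).
    unfold cc_flux at 1. rewrite Nat.ltb_irrefl.
    rewrite flux_eq by lia. rewrite HB by lia.
    rewrite HNj in HC at 1. rewrite HGS in HC. rewrite <- HNj in HC.
    assert (HP : Phi f N = Phi f j + f N) by (rewrite HNj; reflexivity).
    unfold rr in *.
    replace (G j) with (Phi f j + f N - g N) by lra. field. lra.
Qed.

End S.

Theorem mainTheorem4 (N : nat) (dw dt : R) (C D f : nat -> R)
  (hN : (1 <= N)%nat) (hdw : 0 < dw) (hdt : 0 < dt)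
  (hD : forall i : nat, (i < N)%nat -> 0 < D i)
  (hCFL : dt * (2 * cc_Cmax N C) < dw) :
  (exists g : nat -> R, cc_scheme N dw dt C D f g /\
     forall h : nat -> R, cc_scheme N dw dt C D f h ->
       forall i : nat, (i <= N)%nat -> h i = g i)
  /\
  ((forall i : nat, (i <= N)%nat -> 0 <= f i) ->
     forall g : nat -> R, cc_scheme N dw dt C D f g ->
       forall i : nat, (i <= N)%nat -> 0 <= g i).
Proof.
  split.
  - destruct (existence N dw dt C D hdw hdt hD f hN) as [g Hg].
    exists g. split; auto. intros h Hh i Hi.
    pose proof (scheme_diff N dw dt C D f g h Hg Hh) as H1.
    pose proof (scheme_diff N dw dt C D f h g Hh Hg) as H2.
    assert (Hz : forall i, (i <= N)%nat -> 0 <= (fun _ : nat => 0) i) by (intros; simpl; lra).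
    pose proof (positivity N dw dt C D hdw hdt hD _ _ Hz H1 i Hi).
    pose proof (positivity N dw dt C D hdw hdt hD _ _ Hz H2 i Hi).
    simpl in *. lra.
  - intros Hf g Hg. exact (positivity N dw dt C D hdw hdt hD f g Hf Hg).
Qed.
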